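(* For every $n\in\mathbb N$, $2n\,\theta(s_n^2)=4n-2$. In particular $\lim_{n\to\infty}\theta(s_n^2)=2$.
   Context: $F$ is Thompson's group: the group of piecewise linear homeomorphisms of $[0,1]$ with finitely many dyadic breakpoints and slopes powers of $2$, with product $(fg)(t)=g(f(t))$; its standard generators are $x_0$ ($x_0(t)=2t$ on $[0,1/4]$, $t+1/4$ on $[1/4,1/2]$, $t/2+1/2$ on $[1/2,1]$) and $x_{k+1}=\varphi_R(x_k)$, where $\varphi_R(g)(t)=t$ on $[0,1/2]$ and $\tfrac12(1+g(2t-1))$ on $[1/2,1]$. Let $S$ be the set of dyadic rationals $t=\sum_{k=1}^m a_k2^{-k}$ ($a_k\in\{0,1\}$) with $\sum_ka_k$ even; Jones's oriented subgroup is $\vec F=\{g\in F: g(S)=S\}$ (equivalently the set of $g$ whose planar graph is 2-colourable). $\theta:\mathbb C[F]\to\mathbb C$ is the linear functional with $\theta(g)=1$ if $g\in\vec F$ and $\theta(g)=0$ otherwise, for $g\in F$. In $\mathbb C[F]$, $a_k=(x_k+x_k^{-1})/\sqrt2$ and $s_n=(a_0+\dots+a_{n-1})/\sqrt n$. *)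

(* Defs.v *)
From HB Require Import structures.
From mathcomp Require Import all_boot all_order all_algebra all_field.
From Stdlib Require Import ClassicalEpsilon.
Set Implicit Arguments. Unset Strict Implicit. Unset Printing Implicit Defensive.
Import Order.TTheory GRing.Theory Num.Theory.
Local Open Scope ring_scope.

(* Elements of F are represented by their action on the rationals of [0,1]
   (a PL map with dyadic breakpoints is determined by it).  *)
Definition Fmap := rat -> rat.

Definition Fmul (f g : Fmap) : Fmap := fun t => g (f t).

Definition x0 : Fmap := fun t =>
  if t <= 1/4 then 2 * t else if t <= 1/2 then t + 1/4 else t / 2 + 1/2.
Definition x0inv : Fmap := fun t =>
  if t <= 1/2 then t / 2 else if t <= 3/4 then t - 1/4 else 2 * t - 1.

Definition phiR (g : Fmap) : Fmap := fun t =>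
  if t <= 1/2 then t else (1 + g (2 * t - 1)) / 2.

(* x_k = phi_R^k(x_0);  x_k^{-1} = phi_R^k(x_0^{-1}) since phi_R is a homomorphism *)
Definition xk (k : nat) : Fmap := iter k phiR x0.
Definition xkinv (k : nat) : Fmap := iter k phiR x0inv.

Definition dyadic_val (a : seq bool) : rat :=
  \sum_(i < size a) (nth false a i)%:R / 2 ^+ i.+1.
Definition inS (t : rat) : Prop :=
  exists a : seq bool, t = dyadic_val a /\ ~~ odd (count id a).

Definition preservesS (g : Fmap) : Prop :=
  (forall t, inS t -> inS (g t)) /\ (forall u, inS u -> exists t, inS t /\ g t = u).

(* theta on group elements: indicator of Jones's oriented subgroup F-> *)
Definition thetaF (g : Fmap) : algC :=
  if excluded_middle_informative (preservesS g) then 1 else 0.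

(* Elements of C[F] written as formal linear combinations sum_i c_i g_i. *)
Definition CF := seq (algC * Fmap).
Definition CFadd (A B : CF) : CF := A ++ B.
Definition CFscale (c : algC) (A : CF) : CF := [seq (c * p.1, p.2) | p <- A].
Definition CFmul (A B : CF) : CF :=
  [seq (p.1 * q.1, Fmul p.2 q.2) | p <- A, q <- B].
Definition CFgen (g : Fmap) : CF := [:: (1, g)].

(* theta extended linearly (well defined on C[F] since it is linear) *)
Definition theta (A : CF) : algC := \sum_(p <- A) p.1 * thetaF p.2.

Definition a_ (k : nat) : CF :=
  CFscale (sqrtC 2)^-1 (CFadd (CFgen (xk k)) (CFgen (xkinv k))).
Definition s_ (n : nat) : CF :=
  CFscale (sqrtC n%:R)^-1 (flatten [seq a_ k | k <- iota 0 n]).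

(* Main.v *)
Require Import Defs.
From mathcomp Require Import all_boot all_order all_algebra all_field.
From mathcomp Require Import ring lra zify.
From Stdlib Require Import ClassicalEpsilon.
Set Implicit Arguments. Unset Strict Implicit. Unset Printing Implicit Defensive.
Import Order.TTheory GRing.Theory Num.Theory.
Local Open Scope ring_scope.

Notation dv := dyadic_val.

Lemma dv_nil : dv [::] = 0.
Proof. by rewrite /dyadic_val big_ord0. Qed.

Lemma dv_cons b w : dv (b :: w) = ((b : nat)%:R + dv w) / 2.
Proof.
rewrite /dyadic_val /= big_ord_recl /= expr1 mulrDl; congr (_ + _).
rewrite [in RHS]big_distrl /=; apply: eq_bigr => i _.
by rewrite /bump /= add0n exprS invfM mulrA mulrAC.
Qed.

Lemma dv_bounds w : 0 <= dv w < 1.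
Proof.
elim: w => [|b w IH]; first by rewrite dv_nil.
case/andP: IH => h1 h2; rewrite dv_cons; case: b => /=; apply/andP; split; lra.
Qed.

Lemma dv_ge0 w : 0 <= dv w. Proof. by case/andP: (dv_bounds w). Qed.
Lemma dv_lt1 w : dv w < 1. Proof. by case/andP: (dv_bounds w). Qed.

Lemma dv0 w : dv w = 0 -> count id w = 0%N.
Proof.
elim: w => [//|b w IH]; rewrite dv_cons => h.
have := dv_ge0 w; case: b h => /= h h0; first by exfalso; clear IH; lra.
by rewrite IH //; lra.
Qed.

Lemma dv_par a b : dv a = dv b -> odd (count id a) = odd (count id b).
Proof.
elim: a b => [|c a IH] [|d b].
- by [].
- by rewrite dv_nil => /esym /dv0 ->.
- by rewrite dv_nil => /dv0 ->.
rewrite !dv_cons => h.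
have := dv_bounds a; have := dv_bounds b.
case: c h; case: d => /= h /andP[h1 h2] /andP[h3 h4].
- by rewrite (IH b) //; lra.
- by exfalso; lra.
- by exfalso; lra.
- by rewrite (IH b) //; lra.
Qed.

Definition X0s (a : seq bool) : seq bool :=
  match a with
  | false :: false :: w => false :: w
  | false :: true :: w => true :: false :: w
  | true :: w => true :: true :: w
  | _ => [::]
  end.
Definition Y0s (a : seq bool) : seq bool :=
  match a with
  | true :: true :: w => true :: w
  | true :: false :: w => false :: true :: w
  | [:: true] => [:: false; true]
  | false :: w => false :: false :: w
  | [::] => [::]
  end.
Definition liftS (G : seq bool -> seq bool) (a : seq bool) : seq bool :=
  match a with
  | true :: w => true :: G w
  | false :: w => false :: w
  | [::] => [::]
  end.
Definition Xs k := iter k liftS X0s.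
Definition Ys k := iter k liftS Y0s.

Ltac ifs := repeat match goal with |- context [if ?b then _ else _] =>
  let h := fresh "h" in destruct b eqn:h; [| move/negbT: h; rewrite -ltNge => h] end.

Lemma x0_val a : x0 (dv a) = dv (X0s a).
Proof.
have B := dv_bounds.
case: a => [|b [|c w]]; rewrite /x0.
- by rewrite /= dv_nil; ifs; lra.
- case: b; rewrite /= ?dv_cons ?dv_nil /=; ifs; lra.
- have /andP[h1 h2] := B w.
  case: b; case: c; rewrite /= !dv_cons /=; ifs; lra.
Qed.

Lemma x0inv_val a : x0inv (dv a) = dv (Y0s a).
Proof.
have B := dv_bounds.
case: a => [|b [|c w]]; rewrite /x0inv.
- by rewrite /= dv_nil; ifs; lra.
- case: b; rewrite /= ?dv_cons ?dv_nil /=; ifs; lra.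
- have /andP[h1 h2] := B w.
  case: b; case: c; rewrite /= !dv_cons /=; ifs; lra.
Qed.

Lemma phiR_val (g : Fmap) G : g 0 = 0 -> (forall a, g (dv a) = dv (G a)) ->
  forall a, phiR g (dv a) = dv (liftS G a).
Proof.
move=> g0 Hg [|b w]; rewrite /phiR.
- by rewrite /= dv_nil; ifs; lra.
have /andP[h1 h2] := dv_bounds w.
case: b; rewrite /= !dv_cons /=; ifs; try lra.
- have v0 : dv w = 0 by lra.
  by rewrite -Hg v0 g0; lra.
- have -> : 2 * ((1 + dv w) / 2) - 1 = dv w by field.
  by rewrite Hg.
Qed.

Lemma x0_0 : x0 0 = 0. Proof. by rewrite /x0; ifs; lra. Qed.
Lemma x0inv_0 : x0inv 0 = 0. Proof. by rewrite /x0inv; ifs; lra. Qed.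
Lemma phiR_0 g : phiR g 0 = 0. Proof. by rewrite /phiR; ifs; lra. Qed.
Lemma xk_0 k : xk k 0 = 0. Proof. by case: k => [|k]; rewrite /xk /= ?phiR_0 ?x0_0. Qed.
Lemma xkinv_0 k : xkinv k 0 = 0. Proof. by case: k => [|k]; rewrite /xkinv /= ?phiR_0 ?x0inv_0. Qed.

Lemma xk_val k a : xk k (dv a) = dv (Xs k a).
Proof.
elim: k a => [|k IH] a; first exact: x0_val.
by rewrite /xk /Xs /= (phiR_val (xk_0 k) IH).
Qed.
Lemma xkinv_val k a : xkinv k (dv a) = dv (Ys k a).
Proof.
elim: k a => [|k IH] a; first exact: x0inv_val.
by rewrite /xkinv /Ys /= (phiR_val (xkinv_0 k) IH).
Qed.

Fixpoint ones (m : nat) (a : seq bool) : bool :=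
  match m with
  | 0 => true
  | m'.+1 => if a is true :: w then ones m' w else false
  end.

Lemma X0s_par a : odd (count id (X0s a)) = odd (count id a) (+) ones 1 a.
Proof.
case: a => [|[] [|[] w]] //=; by rewrite ?addbT ?addbF ?negbK.
Qed.
Lemma Y0s_par a : odd (count id (Y0s a)) = odd (count id a) (+) ones 2 a.
Proof.
case: a => [|[] [|[] w]] //=; by rewrite ?addbT ?addbF ?negbK.
Qed.

Lemma liftS_par G m a : (forall a, odd (count id (G a)) = odd (count id a) (+) ones m a) ->
  odd (count id (liftS G a)) = odd (count id a) (+) ones m.+1 a.
Proof.
move=> HG; case: a => [|[] w] /=; rewrite ?addbF //.
by rewrite !add0n HG addNb.
Qed.

Lemma Xs_par k a : odd (count id (Xs k a)) = odd (count id a) (+) ones k.+1 a.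
Proof. elim: k a => [|k IH] a; [exact: X0s_par | exact: liftS_par]. Qed.
Lemma Ys_par k a : odd (count id (Ys k a)) = odd (count id a) (+) ones k.+2 a.
Proof. elim: k a => [|k IH] a; [exact: Y0s_par | exact: liftS_par]. Qed.

Lemma Xs_ones k a : ones k.+2 (Xs k a) = ones k.+1 a.
Proof.
elim: k a => [|k IH] a; first by case: a => [|[] [|[] w]].
by case: a => [|[] w] //; exact: IH.
Qed.
Lemma Ys_ones k a : ones k.+1 (Ys k a) = ones k.+2 a.
Proof.
elim: k a => [|k IH] a; first by case: a => [|[] [|[] w]].
by case: a => [|[] w] //; exact: IH.
Qed.

Lemma ones_nseq m r c : ~~ nth false c 0 -> ones m (nseq r true ++ c) = (m <= r)%N.
Proof.
move=> hc; elim: r m => [|r IH] [|m] //=.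
by case: c hc => [|[] c].
Qed.

Lemma Xs_N1 i : Xs i (nseq i.+1 true) = nseq i.+2 true.
Proof. by elim: i => [//|i IH] /=; rewrite IH. Qed.
Lemma Xs_N2 i : Xs i (nseq i true ++ [:: false; true]) = nseq i.+1 true ++ [:: false].
Proof. by elim: i => [//|i IH] /=; rewrite IH. Qed.
Lemma Ys_N1 i : Ys i (nseq i.+2 true) = nseq i.+1 true.
Proof. by elim: i => [//|i IH] /=; rewrite IH. Qed.
Lemma Ys_N2 i : Ys i (nseq i.+1 true) = nseq i true ++ [:: false; true].
Proof. by elim: i => [//|i IH] /=; rewrite IH. Qed.

Lemma x0_pos s : 0 < s -> 0 < x0 s. Proof. by move=> h; rewrite /x0; ifs; lra. Qed.
Lemma x0inv_pos s : 0 < s -> 0 < x0inv s. Proof. by move=> h; rewrite /x0inv; ifs; lra. Qed.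
Lemma phiR_pos g s : (forall s, 0 < s -> 0 < g s) -> 0 < s -> 0 < phiR g s.
Proof.
move=> Hg h; rewrite /phiR; ifs; first lra.
have : 0 < g (2 * s - 1) by apply: Hg; lra.
lra.
Qed.
Lemma xk_pos k s : 0 < s -> 0 < xk k s.
Proof. elim: k s => [|k IH] s hs; [exact: x0_pos | exact: phiR_pos]. Qed.
Lemma xkinv_pos k s : 0 < s -> 0 < xkinv k s.
Proof. elim: k s => [|k IH] s hs; [exact: x0inv_pos | exact: phiR_pos]. Qed.

Lemma x0K u : x0inv (x0 u) = u. Proof. by rewrite /x0 /x0inv; ifs; ifs; lra. Qed.
Lemma x0invK u : x0 (x0inv u) = u. Proof. by rewrite /x0 /x0inv; ifs; ifs; lra. Qed.

Lemma phiRK (g h : Fmap) : (forall s, 0 < s -> 0 < h s) -> (forall s, g (h s) = s) ->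
  forall u, phiR g (phiR h u) = u.
Proof.
move=> Hp HK u; rewrite {2}/phiR; ifs.
  by rewrite /phiR h0.
have hp : 0 < h (2 * u - 1) by apply: Hp; lra.
rewrite /phiR; ifs; first lra.
have -> : 2 * ((1 + h (2 * u - 1)) / 2) - 1 = h (2 * u - 1) by field.
rewrite HK; lra.
Qed.

Lemma xkK k u : xkinv k (xk k u) = u.
Proof.
elim: k u => [|k IH] u; first exact: x0K.
exact: (phiRK (@xk_pos k) IH).
Qed.
Lemma xkinvK k u : xk k (xkinv k u) = u.
Proof.
elim: k u => [|k IH] u; first exact: x0invK.
exact: (phiRK (@xkinv_pos k) IH).
Qed.

Definition gen (p : nat * bool) : Fmap := if p.2 then xkinv p.1 else xk p.1.
Definition Gs (p : nat * bool) := if p.2 then Ys p.1 else Xs p.1.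
Definition fl (p : nat * bool) := if p.2 then p.1.+2 else p.1.+1.
Definition im (p : nat * bool) := if p.2 then p.1.+1 else p.1.+2.
Definition flipb (p : nat * bool) := (p.1, ~~ p.2).

Lemma gen_val p a : gen p (dv a) = dv (Gs p a).
Proof. by case: p => i []; [exact: xkinv_val | exact: xk_val]. Qed.
Lemma Gs_par p a : odd (count id (Gs p a)) = odd (count id a) (+) ones (fl p) a.
Proof. by case: p => i []; [exact: Ys_par | exact: Xs_par]. Qed.
Lemma Gs_ones p a : ones (im p) (Gs p a) = ones (fl p) a.
Proof. by case: p => i []; [exact: Ys_ones | exact: Xs_ones]. Qed.
Lemma genK p t : gen (flipb p) (gen p t) = t.
Proof. by case: p => i []; rewrite /gen /flipb /= ?xkK ?xkinvK. Qed.
Lemma genKr p t : gen p (gen (flipb p) t) = t.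
Proof. by case: p => i []; rewrite /gen /flipb /= ?xkK ?xkinvK. Qed.
Lemma im_flip p : im (flipb p) = fl p. Proof. by case: p => i []. Qed.
Lemma fl_flip p : fl (flipb p) = im p. Proof. by case: p => i []. Qed.

Lemma comp_val p q a : Fmul (gen p) (gen q) (dv a) = dv (Gs q (Gs p a)).
Proof. by rewrite /Fmul !gen_val. Qed.
Lemma comp_par p q a : odd (count id (Gs q (Gs p a))) =
  odd (count id a) (+) ones (im p) (Gs p a) (+) ones (fl q) (Gs p a).
Proof. by rewrite Gs_par Gs_par Gs_ones. Qed.

Lemma into_S p q : im p = fl q -> forall t, inS t -> inS (Fmul (gen p) (gen q) t).
Proof.
move=> e t [a [-> ha]]; exists (Gs q (Gs p a)); split; first exact: comp_val.
by rewrite comp_par e addbK.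
Qed.

Lemma pres_pos p q : im p = fl q -> preservesS (Fmul (gen p) (gen q)).
Proof.
move=> e; split; first exact: into_S.
move=> u hu; exists (Fmul (gen (flipb q)) (gen (flipb p)) u); split.
  by apply: into_S => //; rewrite im_flip fl_flip.
by rewrite /Fmul genKr genKr.
Qed.

Lemma witness_t i m : i.+1 != m -> exists a, ones i.+1 (Ys i a) != ones m (Ys i a).
Proof.
move=> hm; have [h|h|h] := ltngtP m i.+1; last by rewrite h eqxx in hm.
+ exists (nseq i.+1 true); rewrite Ys_N2 !ones_nseq //.
  by rewrite ltnn; apply/negP; rewrite -ltnS h.
+ exists (nseq i.+2 true); rewrite Ys_N1 -(cats0 (nseq i.+1 true)) !ones_nseq //.
  by rewrite leqnn -ltnNge.
Qed.
Lemma witness_f i m : i.+2 != m -> exists a, ones i.+2 (Xs i a) != ones m (Xs i a).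
Proof.
move=> hm; have [h|h|h] := ltngtP m i.+2; last by rewrite h eqxx in hm.
+ exists (nseq i true ++ [:: false; true]); rewrite Xs_N2 !ones_nseq //.
  by rewrite ltnn; apply/negP; rewrite -ltnS h.
+ exists (nseq i.+1 true); rewrite Xs_N1 -(cats0 (nseq i.+2 true)) !ones_nseq //.
  by rewrite leqnn -ltnNge.
Qed.
Lemma witness p m : im p != m -> exists a, ones (im p) (Gs p a) != ones m (Gs p a).
Proof. by case: p => i []; [exact: witness_t | exact: witness_f]. Qed.

Lemma pres_neg p q : im p <> fl q -> ~ preservesS (Fmul (gen p) (gen q)).
Proof.
move=> /eqP e [HS HT].
have [a ha] := witness e.
have hpar : odd (count id (Gs q (Gs p a))) = ~~ odd (count id a).
  by move: ha; rewrite comp_par -addbA; case: (ones (im p) (Gs p a)); case: (ones (fl q) (Gs p a)); rewrite //= ?addbT.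
case ea: (odd (count id a)).
- have : inS (dv (Gs q (Gs p a))) by exists (Gs q (Gs p a)); rewrite hpar ea.
  case/HT => t [[b [-> hb]]] hm.
  have linv : forall t, gen (flipb p) (gen (flipb q) (Fmul (gen p) (gen q) t)) = t.
    by move=> t'; rewrite /Fmul !genK.
  have : dv b = dv a by rewrite -(linv (dv b)) -(linv (dv a)) hm comp_val.
  by move/dv_par; rewrite ea; move: hb => /negbTE ->.
- have : inS (Fmul (gen p) (gen q) (dv a)) by apply: HS; exists a; rewrite ea.
  case=> b [hb hev]; move: hb; rewrite comp_val => /dv_par.
  by rewrite hpar ea => h; rewrite -h in hev.
Qed.

Lemma thetaF_gen p q : thetaF (Fmul (gen p) (gen q)) = ((im p == fl q) : nat)%:R.
Proof.
rewrite /thetaF; case: excluded_middle_informative => h; case: eqP => e //=.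
- by case: (pres_neg e h).
- by case: e (pres_pos e).
Qed.

Definition PP n := flatten [seq [:: (k, false); (k, true)] | k <- iota 0 n].

Lemma PPS n : PP n.+1 = PP n ++ [:: (n, false); (n, true)].
Proof. by rewrite /PP -addn1 iotaD map_cat flatten_cat /=. Qed.

Lemma sum_im n m : (\sum_(p <- PP n) ((im p == m) : nat) = (0 < m <= n) + (1 < m <= n.+1))%N.
Proof.
elim: n => [|n IH]; first by rewrite /PP /= big_nil; lia.
rewrite PPS big_cat /= IH !big_cons big_nil /im /=; lia.
Qed.
Lemma sum_fl n m : (\sum_(p <- PP n) ((m == fl p) : nat) = (0 < m <= n) + (1 < m <= n.+1))%N.
Proof.
elim: n => [|n IH]; first by rewrite /PP /= big_nil; lia.
rewrite PPS big_cat /= IH !big_cons big_nil /fl /=; lia.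
Qed.

Lemma count_all n : (\sum_(p <- PP n) \sum_(q <- PP n) ((im p == fl q) : nat) = (4 * n - 2))%N.
Proof.
elim: n => [|n IH]; first by rewrite /PP big_nil.
rewrite PPS big_cat /=.
rewrite (eq_bigr (fun p => \sum_(q <- PP n) ((im p == fl q) : nat) +
   ((im p == n.+1) + (im p == n.+2)))%N); last first.
  by move=> p _; rewrite big_cat /= !big_cons big_nil /fl /= addn0.
rewrite big_split /= IH big_split /= !sum_im !big_cons big_nil /im /= !big_cat /= !sum_fl !big_cons big_nil /fl /= ?big_nil.
case: n {IH} => [|n]; lia.
Qed.

Lemma flat_eq n : flatten [seq a_ k | k <- iota 0 n] =
  [seq ((sqrtC 2)^-1 * 1, gen p) | p <- PP n].
Proof. by rewrite /PP map_flatten -map_comp; congr flatten; apply: eq_map => k. Qed.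

Lemma s_eq n : s_ n = [seq ((sqrtC n%:R)^-1 * ((sqrtC 2)^-1 * 1), gen p) | p <- PP n].
Proof. by rewrite /s_ flat_eq /CFscale -map_comp. Qed.

Lemma theta_eq n : theta (CFmul (s_ n) (s_ n)) =
  ((sqrtC n%:R)^-1 * ((sqrtC 2)^-1 * 1)) * ((sqrtC n%:R)^-1 * ((sqrtC 2)^-1 * 1))
  * (4 * n - 2)%N%:R.
Proof.
rewrite -count_all s_eq /theta /CFmul big_allpairs_dep big_map natr_sum mulr_sumr.
apply: eq_bigr => p _; rewrite big_map natr_sum mulr_sumr.
by apply: eq_bigr => q _ /=; rewrite thetaF_gen.
Qed.

Lemma sq_inv (x : algC) : 0 <= x -> (sqrtC x)^-1 * (sqrtC x)^-1 = x^-1.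
Proof. by move=> _; rewrite -invfM -expr2 sqrtCK. Qed.

Lemma theta_val n : (0 < n)%N -> theta (CFmul (s_ n) (s_ n)) = 2 - (n%:R)^-1.
Proof.
move=> n0; rewrite theta_eq natrB; last by lia.
have hn : (n%:R : algC) != 0 by rewrite pnatr_eq0 -lt0n.
have e : (sqrtC n%:R)^-1 * ((sqrtC 2)^-1 * 1) * ((sqrtC n%:R)^-1 * ((sqrtC 2)^-1 * 1))
   = (n%:R : algC)^-1 * 2^-1.
  rewrite !mulr1 mulrACA sq_inv ?ler0n // sq_inv //; lra.
by rewrite e natrM; field.
Qed.

Theorem mainTheorem13 :
  (forall n : nat, (0 < n)%N ->
     2 * n%:R * theta (CFmul (s_ n) (s_ n)) = 4 * n%:R - 2 :> algC) /\
  (forall eps : algC, 0 < eps -> exists N : nat, forall n : nat, (N <= n)%N ->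
     `|theta (CFmul (s_ n) (s_ n)) - 2| < eps).
Proof.
split.
  move=> n n0; rewrite theta_val //.
  have hn : (n%:R : algC) != 0 by rewrite pnatr_eq0 -lt0n.
  by field.
move=> eps he; exists (Num.Def.archi_bound eps^-1).+1 => n hn.
have n0 : (0 < n)%N by apply: leq_trans hn.
rewrite theta_val // addrAC subrr add0r normrN ger0_norm ?invr_ge0 ?ler0n //.
have he' : 0 < eps^-1 by rewrite invr_gt0.
have hb := archi_boundP (ltW he').
rewrite -(invrK eps) ltf_pV2 ?posrE ?invr_gt0 ?ltr0n //.
apply: lt_le_trans hb _; rewrite ler_nat; exact: ltnW.
Qed.
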